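(* There exists a problem instance, consisting of a finite set $\mathbb{X}$, a Gaussian process prior over $f:\mathbb{X}\to\mathbb{R}$, and a base algorithm $\mathcal{A}$ assigning to each function $g:\mathbb{X}\to\mathbb{R}$ a target set $\mathcal{O}_{\mathcal{A}}(g)\subset\mathbb{X}$, such that if the sequence of points $\{x_n\}_{n=1}^\infty$ is chosen according to the PS-BAX algorithm, then there is a set $X\subset\mathbb{X}$ with $$\lim_{n\to\infty}\mathbf{P}_n(\mathcal{O}_{\mathcal{A}}(f)=X)=1/2$$ almost surely for $f$ drawn from the prior.
   Context: Probabilistic model: $f$ is drawn from a (possibly degenerate) Gaussian process prior on $\mathbb{X}$; observations are $y_k=f(x_k)+\epsilon_k$ with $\epsilon_k$ i.i.d. $\mathcal{N}(0,\sigma^2)$, independent of $f$, for some $\sigma^2\ge0$. Data: $\mathcal{D}_0$ is an initial dataset and $\mathcal{D}_n=\mathcal{D}_{n-1}\cup\{(x_n,y_n)\}$. $\mathbf{P}_n$ denotes conditional probability given the $\sigma$-algebra generated by $\mathcal{D}_{n-1}$; $\sigma_n(x)$ is the posterior standard deviation of $f(x)$ given $\mathcal{D}_{n-1}$. PS-BAX algorithm: at each iteration $n$, (1) draw $\tilde f_n$ from the posterior $p(f\mid\mathcal{D}_{n-1})$; (2) set $X_n=\mathcal{O}_{\mathcal{A}}(\tilde f_n)$; (3) choose $x_n\in\arg\max_{x\in X_n}\sigma_n(x)$; (4) observe $y_n=f(x_n)+\epsilon_n$ and update $\mathcal{D}_n$. *)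

(* Defs.v *)
From HB Require Import structures.
From mathcomp Require Import all_boot all_order all_algebra.
From mathcomp Require Import all_classical all_reals all_analysis.
Set Implicit Arguments. Unset Strict Implicit. Unset Printing Implicit Defensive.
Import Order.TTheory GRing.Theory Num.Theory.
Import numFieldNormedType.Exports.
Local Open Scope classical_set_scope.
Local Open Scope ring_scope.

Section PSBAX.
Context {R : realType}.

Definition cyl (X : Type) : set (set (X -> R)) :=
  [set S | exists (x : X) (B : set R), measurable B /\ S = [set g | B (g x)]].
Definition fun_sigma (X : Type) : set (set (X -> R)) := smallest (sigma_algebra setT) (@cyl X).

Context {d : measure_display} {T : measurableType d}.

Definition gen (G : set (set T)) : set (set T) := smallest (sigma_algebra setT) G.

Definition rv_gen (Y : T -> R) : set (set T) :=
  [set A | exists B : set R, measurable B /\ A = Y @^-1` B].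
Definition loc_gen (X : Type) (Z : T -> X) : set (set T) :=
  [set A | exists S : set X, A = Z @^-1` S].
Definition fun_gen (X : Type) (Z : T -> X -> R) : set (set T) :=
  [set A | exists S, @fun_sigma X S /\ A = Z @^-1` S].

Variable P : probability T R.

Definition cond_exp_version (G : set (set T)) (Y Z : T -> R) : Prop :=
  (forall B : set R, measurable B -> G (Z @^-1` B)) /\
  P.-integrable setT (EFin \o Z) /\
  forall B, G B -> (\int[P]_(w in B) (Z w)%:E = \int[P]_(w in B) (Y w)%:E)%E.

Definition cond_prob_version (G : set (set T)) (A : set T) (Z : T -> R) :=
  cond_exp_version G (\1_A) Z.

Definition normal_law (Y : T -> R) (m v : R) : Prop :=
  measurable_fun setT Y /\
  forall B : set R, measurable B ->
    P (Y @^-1` B) = if v == 0 then (\1_B m)%:E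
                    else normal_prob m (Num.sqrt v) B.

Definition indep_family (I : eqType) (G : I -> set (set T)) : Prop :=
  forall (J : seq I) (A : I -> set T), uniq J ->
    (forall i, i \in J -> G i (A i)) ->
    P (\bigcap_(i in [set i | i \in J]) A i) = (\prod_(i <- J) P (A i))%E.

Variable X : finType.

Definition gaussian_process (F : T -> X -> R) (mu : X -> R)
    (K : X -> X -> R) : Prop :=
  forall c : X -> R,
    normal_law (fun w => \sum_x c x * F w x) (\sum_x c x * mu x)
               (\sum_x \sum_y c x * c y * K x y).

(** Data.  The initial dataset D_0 has locations s0; iteration n >= 1 of the
    algorithm queries xs n.  Observation number k (0-based, counting D_0
    first) is at location [loc k] with noise [eps k]. *)
Definition loc (s0 : seq X) (xs : nat -> T -> X) (k : nat) : T -> X :=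
  fun w => if (k < size s0)%N then nth (xs 0%N w) s0 k
           else xs (k - size s0).+1%N w.
Definition obs (s0 : seq X) (xs : nat -> T -> X) (F : T -> X -> R)
    (eps : nat -> T -> R) (k : nat) : T -> R :=
  fun w => F w (loc s0 xs k w) + eps k w.

(** sigma-algebra generated by D_{n-1} (first size s0 + (n-1) observations). *)
Definition hist s0 xs F eps (n : nat) : set (set T) :=
  gen [set A | exists k, (k < size s0 + n.-1)%N /\
        (loc_gen (loc s0 xs k) A \/ rv_gen (obs s0 xs F eps k) A)].

(** All randomness available before the n-th posterior draw:
    f, all noise variables, and the previous posterior samples. *)
Definition pre_info (F : T -> X -> R) (eps : nat -> T -> R)
    (ft : nat -> T -> X -> R) (n : nat) : set (set T) :=
  gen [set A | fun_gen F A \/ (exists k, rv_gen (eps k) A) \/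
               (exists j, (0 < j < n)%N /\ fun_gen (ft j) A)].

Definition psbax_run (mu : X -> R) (K : X -> X -> R) (s2 : R)
    (O : (X -> R) -> set X) (s0 : seq X)
    (F : T -> X -> R) (eps : nat -> T -> R) (ft : nat -> T -> X -> R)
    (xs : nat -> T -> X) (sig : nat -> T -> X -> R) : Prop :=
  (forall x, measurable_fun setT (fun w => F w x)) /\
  gaussian_process F mu K /\
  (forall k, normal_law (eps k) 0 s2) /\
  indep_family (fun i : option nat =>
                  if i is Some k then gen (rv_gen (eps k)) else gen (fun_gen F)) /\
  (forall n, (0 < n)%N ->
     let G := hist s0 xs F eps n in
     (* sig n w x is the posterior standard deviation of f(x) given D_{n-1} *)
     (forall x, (forall w, 0 <= sig n w x) /\
        exists M, cond_exp_version G (fun w => F w x) M /\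
          cond_exp_version G (fun w => (F w x - M w) ^+ 2)
                             (fun w => sig n w x ^+ 2)) /\
     (* (1) ft n is a draw from p(f | D_{n-1}) using fresh randomness:
        conditionally on D_{n-1} it has the posterior law of f and is
        independent of (f, noise, previous samples) *)
     (forall x, measurable_fun setT (fun w => ft n w x)) /\
     (forall A S Z1 Z2, pre_info F eps ft n A -> @fun_sigma X S ->
        cond_prob_version G A Z1 ->
        cond_prob_version G [set w | S (F w)] Z2 ->
        cond_prob_version G (A `&` [set w | S (ft n w)]) (Z1 \* Z2)) /\
     (forall w, O (ft n w) (xs n w) /\
        forall x', O (ft n w) x' -> sig n w x' <= sig n w (xs n w)) /\
     (* the choice (incl. tie-breaking) uses only D_{n-1} and ft n *)
     (forall x, gen [set A | G A \/ fun_gen (ft n) A] (xs n @^-1` [set x]))).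

End PSBAX.
Arguments cyl {R} X.
Arguments fun_sigma {R} X.

(* Main.v *)
Set Warnings "-notation-overridden,-ambiguous-paths,-notation-incompatible-prefix".
Require Import Defs.
From HB Require Import structures.
From mathcomp Require Import all_boot all_order all_algebra.
From mathcomp Require Import all_classical all_reals all_analysis.
From mathcomp Require Import measurable_realfun.
Import Order.TTheory GRing.Theory Num.Theory.
Import numFieldNormedType.Exports.
Local Open Scope classical_set_scope.
Local Open Scope ring_scope.
From mathcomp Require Import ring lra.
Section gen_lemmas.
Context (R : realType) (d : measure_display) (T : measurableType d)
  (P : probability T R).

Lemma pos_null (g : T -> R) (B : set T) : measurable B ->
  measurable_fun setT g ->
  (\int[P]_(w in B) (g w)%:E = 0)%E -> (forall w, B w -> 0 < g w) ->
  {ae P, forall w, ~ B w}.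
Proof.
move=> mB mg H hpos.
have h : (\int[P]_(w in B) `|(g w)%:E| = 0)%E.
  rewrite -H; apply: eq_integral => w /set_mem Bw.
  by rewrite gee0_abs // lee_fin ltW // hpos.
have mgB : measurable_fun B (fun w => (g w)%:E).
  by apply/measurable_EFinP; exact: measurable_funS mg.
have {}h := (@ae_eq_integral_abs _ _ _ P B mB (fun w => (g w)%:E) mgB).1 h.
apply: filterS h => w hw Bw.
move: (hw Bw) => /= /eqP; rewrite eqe => /eqP g0.
by have := hpos w Bw; rewrite g0 ltxx.
Qed.

Lemma half_ae (Z : T -> R) (c : R) :
  measurable_fun setT Z -> P.-integrable setT (EFin \o Z) ->
  (forall Y, measurable Y ->
     (\int[P]_(w in Z @^-1` Y) (Z w)%:E = c%:E * P (Z @^-1` Y))%E) ->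
  {ae P, forall w, Z w = c}.
Proof.
move=> mZ iZ hZ.
have mcr : measurable [set r : R | c < r].
  have H := measurable_fun_ltr (measurable_cst c) (@measurable_id _ R setT) measurableT.
  by have := H [set true] I; rewrite setTI; apply.
have mrc : measurable [set r : R | r < c].
  have H := measurable_fun_ltr (@measurable_id _ R setT) (measurable_cst c) measurableT.
  by have := H [set true] I; rewrite setTI; apply.
have mBp : measurable [set w | c < Z w].
  have H := measurable_fun_ltr (measurable_cst c) mZ measurableT.
  by have := H [set true] I; rewrite setTI; apply.
have mBn : measurable [set w | Z w < c].
  have H := measurable_fun_ltr mZ (measurable_cst c) measurableT.
  by have := H [set true] I; rewrite setTI; apply.
have fin B : measurable B -> (c%:E * P B)%E \is a fin_num.
  by move=> mB; rewrite fin_numM // fin_num_measure.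
have h1 : {ae P, forall w, ~ [set w | c < Z w] w}.
  apply: (pos_null (fun w => Z w - c) [set w | c < Z w]) => //.
  - by apply: measurable_funB => //; exact: measurable_cst.
  - rewrite (_ : (fun w => _) = (fun w => (Z w)%:E - (cst c w)%:E)%E); last first.
      by apply/funext => w; rewrite EFinB.
    rewrite integralB_EFin //; last exact: finite_measure_integrable_cst.
      rewrite (_ : (\int[P]_(x in _) (Z x)%:E)%E = (c%:E * P [set w | (c < Z w)%R])%E);
        last by apply: (hZ [set r | c < r]); exact: mcr.
      rewrite (_ : (\int[P]_(x in _) (@cst T R c x)%:E)%E = (c%:E * P [set w | (c < Z w)%R])%E);
        last by rewrite -integral_cst //; apply: eq_integral.
      by rewrite subee // fin.
    exact: integrableS iZ.
  by move=> w /=; rewrite subr_gt0.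
have h2 : {ae P, forall w, ~ [set w | Z w < c] w}.
  apply: (pos_null (fun w => c - Z w) [set w | Z w < c]) => //.
  - by apply: measurable_funB => //; exact: measurable_cst.
  - rewrite (_ : (fun w => _) = (fun w => (cst c w)%:E - (Z w)%:E)%E); last first.
      by apply/funext => w; rewrite EFinB.
    rewrite integralB_EFin //; last exact: integrableS iZ.
      rewrite (_ : (\int[P]_(x in _) (Z x)%:E)%E = (c%:E * P [set w | (Z w < c)%R])%E);
        last by apply: (hZ [set r | r < c]); exact: mrc.
      rewrite (_ : (\int[P]_(x in _) (@cst T R c x)%:E)%E = (c%:E * P [set w | (Z w < c)%R])%E);
        last by rewrite -integral_cst //; apply: eq_integral.
      by rewrite subee // fin.
    exact: finite_measure_integrable_cst.
  by move=> w /=; rewrite subr_gt0.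
apply: filterS2 h1 h2 => w n1 n2.
apply/eqP; rewrite eq_le; apply/andP; split; rewrite leNgt; apply/negP => //.
Qed.

End gen_lemmas.

Section sa.
Context {T : Type} {G : set (set T)}.
Local Notation S := (smallest (sigma_algebra setT) G).
Lemma sa0 : S set0. Proof. by case: (smallest_sigma_algebra setT G). Qed.
Lemma saD A : S A -> S (setT `\` A). Proof. by case: (smallest_sigma_algebra setT G) => _ h _; apply: h. Qed.
Lemma saU (A : nat -> set T) : (forall k, S (A k)) -> S (\bigcup_k A k).
Proof. by case: (smallest_sigma_algebra setT G) => _ _ h; apply: h. Qed.
Lemma saT : S setT. Proof. by have := @saD set0 sa0; rewrite setD0. Qed.
Lemma saC A : S A -> S (~` A). Proof. by rewrite -setTD; apply: saD. Qed.
Lemma saI (A : nat -> set T) : (forall k, S (A k)) -> S (\bigcap_k A k).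
Proof.
move=> h; have -> : \bigcap_k A k = ~` \bigcup_k ~` A k by rewrite -setC_bigcap setCK.
apply: saC.
by apply: saU => k; apply: saC.
Qed.
Lemma saG A : G A -> S A. Proof. by move=> GA; apply: sub_gen_smallest. Qed.
End sa.

Definition mu0 {R : realType} : option bool -> R := fun _ => 0.
Definition K0 {R : realType} : option bool -> option bool -> R :=
  fun x y => if (x == None) && (y == None) then 1 else 0.
Definition O0 {R : realType} (g : option bool -> R) : set (option bool) :=
  if 0 < g None then [set Some true] else [set Some false].

Lemma sum_delta {R : realType} (f : option bool -> R) x0 :
  \sum_x (if x == x0 then 1 else 0) * f x = f x0.
Proof.
rewrite (bigD1 x0) //= eqxx mul1r big1 ?addr0 // => x /negbTE ->.
by rewrite mul0r.
Qed.

Lemma dsum {R : realType} (c : option bool -> R) :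
  \sum_x \sum_y c x * c y * K0 x y = c None * c None.
Proof.
rewrite -(sum_delta (fun x => c x * c None) None).
apply: eq_bigr => x _.
rewrite mulrA -(sum_delta (fun y => (if x == None then 1 else 0) * c x * c y) None).
apply: eq_bigr => y _; rewrite /K0.
by case: (x == None); case: (y == None) => /=; ring.
Qed.

Section inst.
Context (R : realType) (d : measure_display) (T : measurableType d)
  (P : probability T R).
Variables (F : T -> option bool -> R) (eps : nat -> T -> R)
  (ft : nat -> T -> option bool -> R) (xs : nat -> T -> option bool)
  (sig : nat -> T -> option bool -> R).
Hypothesis run : psbax_run P (@mu0 R) (@K0 R) 0 (@O0 R) [::] F eps ft xs sig.

Let G n := hist [::] xs F eps n.

Lemma mF x : measurable_fun setT (fun w => F w x).
Proof. by case: run. Qed.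
Lemma gp : gaussian_process P F mu0 K0.
Proof. by case: run => _ []. Qed.
Lemma epsN k : normal_law P (eps k) 0 0.
Proof. by case: run => _ [_ []]. Qed.
Lemma mft n : (0 < n)%N -> forall x, measurable_fun setT (fun w => ft n w x).
Proof. by move=> n0; case: run => _ [_ [_ [_ h]]]; case: (h n n0) => _ []. Qed.
Lemma samp n : (0 < n)%N -> forall A S Z1 Z2,
  pre_info F eps ft n A -> fun_sigma (option bool) S ->
  cond_prob_version P (G n) A Z1 ->
  cond_prob_version P (G n) [set w | S (F w)] Z2 ->
  cond_prob_version P (G n) (A `&` [set w | S (ft n w)]) (Z1 \* Z2).
Proof. by move=> n0; case: run => _ [_ [_ [_ h]]]; case: (h n n0) => _ [_ []]. Qed.
Lemma xsE n : (0 < n)%N -> forall w,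
  xs n w = if 0 < ft n w None then Some true else Some false.
Proof.
move=> n0 w; case: run => _ [_ [_ [_ h]]]; case: (h n n0) => _ [_ [_ [hw _]]].
by case: (hw w); rewrite /O0; case: ifP.
Qed.

Lemma lawc (c : option bool -> R) :
  normal_law P (fun w => \sum_x c x * F w x) 0 (c None * c None).
Proof.
have := gp c; rewrite dsum (_ : \sum_x c x * mu0 x = 0) //.
by rewrite big1 // => x _; rewrite /mu0 mulr0.
Qed.

Lemma law_a : normal_law P (fun w => F w None) 0 1.
Proof.
have := lawc (fun x => if x == None then 1 else 0).
rewrite /= mulr1 (_ : (fun w => _) = (fun w => F w None)) //.
by apply/funext => w; rewrite sum_delta.
Qed.

Lemma law_na : normal_law P (fun w => - F w None) 0 1.
Proof.
have := lawc (fun x => - (if x == None then 1 else 0)).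
rewrite /= mulrNN mulr1 (_ : (fun w => _) = (fun w => - F w None)) //.
apply/funext => w; rewrite -(sum_delta (F w) None) -sumrN.
by apply: eq_bigr => x _; rewrite mulNr.
Qed.

Lemma law_s b : normal_law P (fun w => F w (Some b)) 0 0.
Proof.
have := lawc (fun x => if x == Some b then 1 else 0).
rewrite /= mulr0 (_ : (fun w => _) = (fun w => F w (Some b))) //.
by apply/funext => w; rewrite sum_delta.
Qed.

Lemma ae0 (Y : T -> R) : normal_law P Y 0 0 -> {ae P, forall w, Y w = 0}.
Proof.
case=> mY hY; exists (Y @^-1` ~` [set 0]); split.
- by have := mY measurableT _ (measurableC (measurable_set1 (0:R))); rewrite setTI.
- rewrite hY; last exact: measurableC (measurable_set1 _).
  rewrite eqxx indicE; case: (boolP (0 \in ~` [set (0:R)])) => [/set_mem h|_] //.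
  by case: h.
- by move=> w /= h.
Qed.

Lemma mpos : measurable [set r : R | 0 < r].
Proof.
have H := measurable_fun_ltr (measurable_cst (0:R)) (@measurable_id _ R setT) measurableT.
by have := H [set true] I; rewrite setTI; apply.
Qed.

Lemma PE : P [set w | 0 < F w None] = (2^-1)%:E.
Proof.
set p := normal_prob (0:R) (Num.sqrt 1) [set r : R | 0 < r].
have h1 : P [set w | 0 < F w None] = p.
  by case: law_a => _ h; have := h _ mpos; rewrite oner_eq0 => e; exact: e.
have h2 : P [set w | F w None < 0] = p.
  case: law_na => _ h; have := h _ mpos; rewrite oner_eq0 => e; rewrite -[RHS]e.
  by congr (P _); apply/seteqP; split => w /=; rewrite oppr_gt0.
have h3 : P [set w | F w None = 0] = 0.
  case: law_a => _ h; have := h _ (measurable_set1 0); rewrite oner_eq0 => e.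
  rewrite (_ : [set w | F w None = 0] = (fun w => F w None) @^-1` [set 0]) // e.
  exact: integral_set1.
have ma := mF None.
have m1 : measurable [set w | 0 < F w None].
  by have := ma measurableT _ mpos; rewrite setTI.
have m2 : measurable [set w | F w None < 0].
  have := ma measurableT [set r | r < 0] _; rewrite setTI; apply.
  have H := measurable_fun_ltr (@measurable_id _ R setT) (measurable_cst (0:R)) measurableT.
  by have := H [set true] I; rewrite setTI; apply.
have m3 : measurable [set w | F w None = 0].
  by have := ma measurableT _ (measurable_set1 0); rewrite setTI.
have hT : P setT = 1%E by rewrite probability_setT.
have eT : setT = ([set w | 0 < F w None] `|` [set w | F w None < 0]) `|` [set w | F w None = 0].
  apply/seteqP; split => w // _ /=.
  by case: (ltgtP (F w None) 0) => h; [left; right|left; left|right].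
have d12 : [set w | 0 < F w None] `&` [set w | F w None < 0] = set0.
  apply/seteqP; split => w //= [h h']; by have := lt_trans h h'; rewrite ltxx.
have d3 : ([set w | 0 < F w None] `|` [set w | F w None < 0]) `&` [set w | F w None = 0] = set0.
  apply/seteqP; split => [x []|//]; case => /= hu hz; by rewrite hz ltxx in hu.
have mU : measurable ([set w | 0 < F w None] `|` [set w | F w None < 0]).
  exact: measurableU.
move: hT; rewrite eT (measureU P mU m3 d3) (measureU P m1 m2 d12).
move=> e; have : (p + p + 0 = 1)%E by rewrite -{1}h1 -h2 -h3; exact: e.
rewrite adde0 h1; clear h1 h2 e; case: p => [r| |] //=.
move=> /eqP; rewrite -EFinD eqe => /eqP hr; congr EFin; lra.
Qed.

Definition code m w : {ffun 'I_m -> bool} := [ffun i : 'I_m => 0 < ft i.+1 w None].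
Definition atom m u := [set w | code m w = u].
Let E := [set w | 0 < F w None].

Lemma mE : measurable E.
Proof. by have := mF None measurableT _ mpos; rewrite setTI. Qed.

Lemma mtpos n : (0 < n)%N -> measurable_fun setT (fun w => 0 < ft n w None).
Proof. by move=> n0; exact: (measurable_fun_ltr (measurable_cst (0:R)) (mft n n0 None)). Qed.

Lemma mtb n (b : bool) : (0 < n)%N -> measurable [set w | (0 < ft n w None) = b].
Proof. by move=> n0; have := mtpos n n0 measurableT [set b] I; rewrite setTI. Qed.

Lemma atomP m u w : atom m u w <->
  forall k (h : (k < m)%N), (0 < ft k.+1 w None) = u (Ordinal h).
Proof.
split.
- by move=> <- k h; rewrite ffunE.
- move=> H; apply/ffunP => i; rewrite ffunE; case: i => k h; exact: H.
Qed.

Lemma atomE m u : atom m u = \bigcap_k [set w | forall h : (k < m)%N,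
  (0 < ft k.+1 w None) = u (Ordinal h)].
Proof.
apply/seteqP; split => w /=.
- by move/atomP => H k _ h; exact: H.
- by move=> H; apply/atomP => k h; exact: H.
Qed.

Lemma Ak_eq m u k (h0 : (k < m)%N) :
  [set w | forall h : (k < m)%N, (0 < ft k.+1 w None) = u (Ordinal h)] =
  [set w | (0 < ft k.+1 w None) = u (Ordinal h0)].
Proof.
apply/seteqP; split => w /= H; first exact: H.
by move=> h; rewrite (bool_irrelevance h h0).
Qed.

Lemma Ak_ge m u k : (m <= k)%N ->
  [set w | forall h : (k < m)%N, (0 < ft k.+1 w None) = u (Ordinal h)] = setT.
Proof.
move=> hk; apply/seteqP; split => w // _ h.
by have := leq_trans h hk; rewrite ltnn.
Qed.

Lemma atom_meas m u : measurable (atom m u).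
Proof.
rewrite atomE; apply: bigcapT_measurable => k.
have [h|h] : (k < m)%N \/ (m <= k)%N by case: ltnP; [left|right].
  by rewrite (@Ak_eq m u k h); exact: mtb.
by rewrite Ak_ge.
Qed.

Lemma locE k w : loc [::] xs k w = xs k.+1 w.
Proof. by rewrite /loc ltn0 subn0. Qed.

Lemma atom_hist m u : G m.+1 (atom m u).
Proof.
rewrite atomE; apply: saI => k.
have [h|h] : (k < m)%N \/ (m <= k)%N by case: ltnP; [left|right].
  rewrite (@Ak_eq m u k h); apply: saG; exists k; split; first by rewrite add0n.
  left; exists [set (if u (Ordinal h) then Some true else Some false)].
  apply/seteqP; split => w /=; rewrite locE xsE //.
  - by move=> ->.
  - by case: (0 < ft _ _ _); case: (u _).
by rewrite Ak_ge //; exact: saT.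
Qed.

Definition Cm m (B : set T) := measurable B /\
  exists U : set {ffun 'I_m -> bool}, {ae P, forall w, B w <-> U (code m w)}.

Lemma Cm_sigma m : sigma_algebra setT (Cm m).
Proof.
split.
- split => //; exists set0; apply: aeW => w; split; by [].
- move=> A [mA [U hU]]; split; first exact: measurableD.
  exists (~` U); apply: filterS hU => w [h1 h2]; split => /=.
  + by move=> [_ nA] hu; apply: nA; apply: h2.
  + by move=> nu; split => // hA; apply: nu; apply: h1.
- move=> A hA; split; first by apply: bigcup_measurable => k _; case: (hA k).
  have /choice [U hU] : forall k, exists U : set {ffun 'I_m -> bool},
      {ae P, forall w, A k w <-> U (code m w)} by move=> k; case: (hA k).
  exists (\bigcup_k U k).
  have := ae_foralln hU; apply: filterS => w hw; split.
  + by move=> [k _ hk]; exists k => //; apply/(hw k).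
  + by move=> [k _ hk]; exists k => //; apply/(hw k).
Qed.

Lemma obsE k w : obs [::] xs F eps k w =
  (if 0 < ft k.+1 w None then F w (Some true) else F w (Some false)) + eps k w.
Proof. by rewrite /obs locE xsE //; case: ifP. Qed.

Lemma mobs k : measurable_fun setT (obs [::] xs F eps k).
Proof.
rewrite (_ : obs _ _ _ _ k = fun w => (if 0 < ft k.+1 w None then F w (Some true)
   else F w (Some false)) + eps k w); last by apply/funext => w; rewrite obsE.
apply: measurable_funD; last by case: (epsN k).
by apply: measurable_fun_ifT; [exact: mtpos| exact: mF| exact: mF].
Qed.

Lemma obs_ae k : {ae P, forall w, obs [::] xs F eps k w = 0}.
Proof.
have h1 := ae0 _ (law_s true); have h2 := ae0 _ (law_s false); have h3 := ae0 _ (epsN k).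
apply: filterS (filterI h1 (filterI h2 h3)) => w [a1 [a2 a3]].
by rewrite obsE a3 /=; case: ifP => _; rewrite ?a1 ?a2 addr0.
Qed.

Lemma hist_Cm m : forall B, G m.+1 B -> Cm m B.
Proof.
apply: smallest_sub; first exact: Cm_sigma.
move=> A [k [hk [[S ->]|[B [mB ->]]]]].
- have hk' : (k < m)%N by move: hk; rewrite add0n.
  split.
    rewrite (_ : _ @^-1` S = (fun w => 0 < ft k.+1 w None) @^-1`
       [set b | S (if b then Some true else Some false)]); last first.
      by apply/funext => w; rewrite /preimage /= locE xsE.
    by have := mtpos k.+1 (ltn0Sn k) measurableT
       [set b | S (if b then Some true else Some false)] I; rewrite setTI.
  exists [set u | S (if u (Ordinal hk') then Some true else Some false)].
  by apply: aeW => w /=; rewrite locE xsE // ffunE.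
- split; first by have := mobs k measurableT _ mB; rewrite setTI.
  exists (fun _ => B 0); apply: filterS (obs_ae k) => w /= ->; by [].
Qed.

Lemma measure_ae (A A' : set T) : measurable A -> measurable A' ->
  {ae P, forall w, A w <-> A' w} -> P A = P A'.
Proof.
move=> mA mA' h.
rewrite -(setIT A) -(setIT A') -(integral_indic P measurableT mA).
rewrite -(integral_indic P measurableT mA').
apply: ae_eq_integral => //.
- by apply/measurable_EFinP; exact: measurable_indic.
- by apply/measurable_EFinP; exact: measurable_indic.
apply: filterS h => w [h1 h2] _ /=.
have e : (w \in A) = (w \in A').
  by apply/idP/idP => /set_mem hw; apply/mem_set; [apply: h1|apply: h2].
by rewrite !indicE e.
Qed.

Definition hA m := forall u, P (E `&` atom m u) = ((2^-1)%:E * P (atom m u))%E.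

Lemma pre_half m : hA m -> forall s : seq {ffun 'I_m -> bool},
  measurable [set w | code m w \in s] /\
  P (E `&` [set w | code m w \in s]) = ((2^-1)%:E * P [set w | code m w \in s])%E.
Proof.
move=> hm; elim=> [|x s [ms IH]].
  rewrite (_ : [set w | code m w \in [::]] = set0); last first.
    by apply/seteqP; split => w //=; rewrite in_nil.
  by rewrite setI0 measure0 mule0.
case: (boolP (x \in s)) => hx.
  rewrite (_ : [set w | code m w \in x :: s] = [set w | code m w \in s]) //.
  apply/seteqP; split => w /=; rewrite in_cons; last by move=> ->; rewrite orbT.
  by case/orP => // /eqP ->.
have eU : [set w | code m w \in x :: s] = atom m x `|` [set w | code m w \in s].
  apply/seteqP; split => w /=; rewrite in_cons.
  - by case/orP => [/eqP|]; [left|right].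
  - by case => [->|->]; rewrite ?eqxx ?orbT.
have dj : atom m x `&` [set w | code m w \in s] = set0.
  apply/seteqP; split => w //= [hw hs]; rewrite /atom /= in hw.
  by rewrite -hw hs in hx.
rewrite eU; split; first by apply: measurableU => //; exact: atom_meas.
rewrite setIUr.
have -> : P ((E `&` atom m x) `|` (E `&` [set w | code m w \in s])) =
    (P (E `&` atom m x) + P (E `&` [set w | code m w \in s]))%E.
  apply: measureU.
  - exact: measurableI mE (atom_meas _ _).
  - exact: measurableI mE ms.
  - by rewrite setIACA dj setI0.
have -> : P (atom m x `|` [set w | code m w \in s]) =
    (P (atom m x) + P [set w | code m w \in s])%E.
  by apply: measureU => //; exact: atom_meas.
by rewrite hm IH ge0_muleDr.
Qed.

Lemma Cm_half m : hA m -> forall B, Cm m B ->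
  P (E `&` B) = ((2^-1)%:E * P B)%E.
Proof.
move=> hm B [mB [U hU]].
set s := [seq u <- enum {ffun 'I_m -> bool} | `[< U u >]].
have hs w : (code m w \in s) <-> U (code m w).
  by rewrite mem_filter mem_enum andbT; split => /asboolP.
have [ms e] := @pre_half m hm s.
rewrite (@measure_ae (E `&` B) (E `&` [set w | code m w \in s])).
- rewrite e; congr (_ * _)%E; apply: measure_ae => //.
  by apply: filterS hU => w hw /=; rewrite hw hs.
- exact: measurableI mE mB.
- exact: measurableI mE ms.
- by apply: filterS hU => w hw /=; rewrite hw hs.
Qed.

Lemma hist_half m : hA m -> forall B, G m.+1 B ->
  measurable B /\ P (E `&` B) = ((2^-1)%:E * P B)%E.
Proof.
move=> hm B /hist_Cm hB; split; first by case: hB.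
exact: (@Cm_half m hm).
Qed.

Lemma half_sub (x y : \bar R) : x \is a fin_num -> y \is a fin_num ->
  x = (y + (2^-1)%:E * x)%E -> y = ((2^-1)%:E * x)%E.
Proof.
case: x => // r; case: y => // t _ _ /eqP; rewrite -EFinM -EFinD eqe => /eqP h.
by congr EFin; lra.
Qed.

Lemma hist_halfC m : hA m -> forall B, G m.+1 B ->
  P (~` E `&` B) = ((2^-1)%:E * P B)%E.
Proof.
move=> hm B hB; have [mB e] := @hist_half m hm B hB.
have mEB : measurable (~` E `&` B) by apply: measurableI => //; exact: measurableC mE.
have e2 : P B = (P (~` E `&` B) + P (E `&` B))%E.
  rewrite (_ : ~` E `&` B = B `\` E); last by rewrite setDE setIC.
  rewrite (setIC E B); exact: (measureDI P mB mE).
apply: half_sub; [exact: fin_num_measure|exact: fin_num_measure|].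
by rewrite -e.
Qed.

Lemma cst_G n (c : R) : forall B, measurable B -> G n ((@cst T R c) @^-1` B).
Proof.
move=> B _; rewrite preimage_cst /G /hist /gen.
by case: ifP => _; [exact: saT | exact: sa0].
Qed.

Lemma intcst (B : set T) (c : R) : measurable B ->
  (\int[P]_(w in B) (@cst T R c w)%:E = c%:E * P B)%E.
Proof. by move=> mB; rewrite -integral_cst //; apply: eq_integral. Qed.

Lemma ver1 n : cond_prob_version P (G n) setT (cst 1).
Proof.
split; first exact: cst_G.
split; first exact: finite_measure_integrable_cst.
by move=> B _; apply: eq_integral => w _; rewrite indicT.
Qed.

Lemma mFb (b : bool) : measurable [set w | (0 < F w None) = b].
Proof.
have H := measurable_fun_ltr (measurable_cst (0:R)) (mF None) measurableT.
by have := H [set b] I; rewrite setTI.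
Qed.

Lemma verE m (hm : hA m) (b : bool) :
  cond_prob_version P (G m.+1) [set w | (0 < F w None) = b] (cst 2^-1).
Proof.
split; first exact: cst_G.
split; first exact: finite_measure_integrable_cst.
move=> B hB; have [mB e] := @hist_half m hm B hB.
rewrite integral_indic //; last exact: mFb.
rewrite (intcst B (2^-1) mB).
case: b; first exact: esym e.
rewrite (_ : [set w | (0 < F w None) = false] = ~` E).
  exact: esym (@hist_halfC m hm B hB).
apply/seteqP; split => w /= h.
  by move=> h'; have h2 : (0 < F w None) = true := h'; rewrite h2 in h.
by apply/negbTE/negP.
Qed.

Lemma preT n : pre_info F eps ft n setT.
Proof. by rewrite /pre_info /gen; exact: saT. Qed.

Lemma fsE : fun_sigma (option bool) [set g : option bool -> R | 0 < g None].
Proof. by apply: saG; exists None, [set r : R | 0 < r]; split => //; exact: mpos. Qed.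

Lemma preE n : pre_info F eps ft n E.
Proof.
rewrite /pre_info /gen; apply: saG; left.
by exists [set g : option bool -> R | 0 < g None]; split => //; exact: fsE.
Qed.

Lemma fsb (b : bool) : fun_sigma (option bool) [set g : option bool -> R | (0 < g None) = b].
Proof.
apply: saG; exists None, [set r : R | (0 < r) = b]; split => //.
have H := measurable_fun_ltr (measurable_cst (0:R)) (@measurable_id _ R setT) measurableT.
by have := H [set b] I; rewrite setTI.
Qed.

Lemma A_step m : hA m -> hA m.+1.
Proof.
move=> hm u.
set u' : {ffun 'I_m -> bool} := [ffun i => u (widen_ord (leqnSn m) i)].
set b := u ord_max.
have eA : atom m.+1 u = atom m u' `&` [set w | (0 < ft m.+1 w None) = b].
  apply/seteqP; split => w.
  - move/atomP => H; split.
    + apply/atomP => k h; rewrite ffunE (H k (leqW h)); congr (u _); exact: val_inj.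
    + rewrite /= (H m (ltnSn m)); congr (u _); exact: val_inj.
  - move=> [/atomP H1 /= H2]; apply/atomP => k h.
    have [hk|hk] : (k < m)%N \/ k = m.
      by move: h; rewrite ltnS leq_eqVlt => /orP [/eqP ->|]; [right|left].
    + rewrite (H1 k hk) ffunE; congr (u _); exact: val_inj.
    + subst k; rewrite H2; congr (u _); exact: val_inj.
have mA' := atom_meas m u'.
have hA' := atom_hist m u'.
have mtb' := mtb m.+1 b (ltn0Sn m).
have [_ [_ i1]] := @samp m.+1 (ltn0Sn m) _ _ _ _ (preT m.+1) (fsb b) (ver1 m.+1) (@verE m hm b).
have [_ [_ i2]] := @samp m.+1 (ltn0Sn m) _ _ _ _ (preE m.+1) (fsb b) (@verE m hm true) (@verE m hm b).
have e1 := i1 _ hA'.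
have e2 := i2 _ hA'.
rewrite integral_indic // in e1; last by apply: measurableI.
rewrite integral_indic // in e2; last by apply: measurableI => //; exact: mE.
have c1 : (\int[P]_(w in atom m u') (((@cst T R 1) \* cst 2^-1) w)%:E = (2^-1)%:E * P (atom m u'))%E.
  by rewrite -intcst //; apply: eq_integral => w _ /=; rewrite mul1r.
have c2 : (\int[P]_(w in atom m u') (((@cst T R 2^-1) \* cst 2^-1) w)%:E = (2^-1 * 2^-1)%:E * P (atom m u'))%E.
  by rewrite -intcst //.
rewrite c1 in e1; rewrite c2 in e2.
have s1 : atom m.+1 u = (setT `&` [set w | (0 < ft m.+1 w None) = b]) `&` atom m u'.
  by rewrite eA setTI setIC.
have s2 : E `&` atom m.+1 u = (E `&` [set w | (0 < ft m.+1 w None) = b]) `&` atom m u'.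
  by rewrite eA setIA setIAC.
rewrite s2 -e2 s1 -e1 EFinM muleA.
by [].
Qed.

Lemma hA0 : hA 0.
Proof.
move=> u; rewrite (_ : atom 0 u = setT); last first.
  by apply/seteqP; split => w // _; apply/atomP => k h.
by rewrite setIT PE probability_setT mule1.
Qed.

Lemma hA_all m : hA m.
Proof. by elim: m => [|m IH]; [exact: hA0 | exact: A_step]. Qed.

Lemma OE (g : option bool -> R) : [set Some true] <> [set Some false] ->
  (O0 g = [set Some true] <-> 0 < g None).
Proof.
move=> ne; rewrite /O0; case: ifP => h; split => // e.
by exfalso; apply: ne; rewrite e.
Qed.

Lemma ne_tf : [set Some true] <> [set Some false].
Proof.
move=> e; have : [set Some true] (Some true) by [].
by rewrite e.
Qed.

Lemma main_ae (Pn : nat -> T -> R) :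
  (forall n, (0 < n)%N ->
     cond_prob_version P (G n) [set w | O0 (F w) = [set Some true]] (Pn n)) ->
  {ae P, forall w, Pn n w @[n --> \oo] --> (2%:R^-1 : R)}.
Proof.
move=> hP.
have eE : [set w | O0 (F w) = [set Some true]] = E.
  by apply/seteqP; split => w /=; move/(OE (F w) ne_tf).
have hn : forall n, {ae P, forall w, (0 < n)%N -> Pn n w = 2^-1}.
  case=> [|m]; first by apply: aeW.
  have [hpre [hint hI]] := hP m.+1 (ltn0Sn m).
  rewrite eE in hI.
  have H := @hist_half m (hA_all m).
  have mZ : measurable_fun setT (Pn m.+1).
    by move=> _ Y mY; rewrite setTI; exact: (H _ (hpre Y mY)).1.
  have := @half_ae R d T P (Pn m.+1) (2^-1) mZ hint.
  have hZ : forall Y, measurable Y -> (\int[P]_(w in Pn m.+1 @^-1` Y) (Pn m.+1 w)%:E =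
      (2^-1)%:E * P (Pn m.+1 @^-1` Y))%E.
    move=> Y mY; rewrite hI; last exact: hpre.
    have [mB e] := H _ (hpre Y mY).
    rewrite integral_indic //; try exact: mE.
  move=> /(_ hZ); apply: filterS => w hw _; exact: hw.
have := ae_foralln hn; apply: filterS => w hw.
apply: cvg_near_cst; exists 1%N => // n /= hn1; exact: hw.
Qed.
End inst.

Theorem theorem2 (R : realType) :
  exists (X : finType) (mu : X -> R) (K : X -> X -> R) (s2 : R)
         (O : (X -> R) -> set X) (s0 : seq X),
    (forall x y, K x y = K y x) /\
    (forall c : X -> R, 0 <= \sum_x \sum_y c x * c y * K x y) /\
    0 <= s2 /\
    (forall g, O g !=set0) /\
    (forall Y, fun_sigma X [set g | O g = Y]) /\
    forall (d : measure_display) (T : measurableType d) (P : probability T R)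
      (F : T -> X -> R) (eps : nat -> T -> R) (ft : nat -> T -> X -> R)
      (xs : nat -> T -> X) (sig : nat -> T -> X -> R),
      psbax_run P mu K s2 O s0 F eps ft xs sig ->
      exists Y : set X,
        forall Pn : nat -> T -> R,
          (forall n, (0 < n)%N ->
             cond_prob_version P (hist s0 xs F eps n)
               [set w | O (F w) = Y] (Pn n)) ->
          {ae P, forall w, Pn n w @[n --> \oo] --> (2%:R^-1 : R)}.
Proof.
exists (option bool), (@mu0 R), (@K0 R), 0, (@O0 R), [::].
split; first by move=> x y; rewrite /K0 andbC.
split; first by move=> c; rewrite dsum -expr2 sqr_ge0.
split; first exact: lexx.
split; first by move=> g; rewrite /O0; case: ifP => _; eexists.
split.
  move=> Y; case: (pselect (Y = [set Some true])) => [->|h1].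
    rewrite (_ : [set g | O0 g = [set Some true]] = [set g : option bool -> R | 0 < g None]).
      exact: fsE.
    by apply/seteqP; split => g /=; move/(@OE R g ne_tf).
  case: (pselect (Y = [set Some false])) => [->|h2].
    rewrite (_ : [set g | O0 g = [set Some false]] = ~` [set g : option bool -> R | 0 < g None]).
      by rewrite /fun_sigma; apply: saC; exact: (@fsE R).
    apply/seteqP; split => g /=.
    - rewrite /O0; case: ifP => h e; first by exfalso; exact: ne_tf e.
      by [].
    - move=> nh; rewrite /O0; case: ifP => h //.
  rewrite (_ : [set g | O0 g = Y] = set0); first by rewrite /fun_sigma; exact: sa0.
  apply/seteqP; split => g //=; rewrite /O0; case: ifP => _ e;
    [apply: h1 | apply: h2]; by rewrite e.
move=> d T P F eps ft xs sig run; exists [set Some true] => Pn hPn.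
exact: (@main_ae R d T P F eps ft xs sig run Pn hPn).
Qed.
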